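(* Let $n\ge 4$ and $t\in[n-1]$ be integers, and let $S$ be a weak $(2n-2t)$-resolving set of $K_n\times K_n$, with $\overline{S}=V\setminus S$. For all distinct $i,i'\in[n]$: if there is some $j\in[n]$ with $(i,j)\in\overline S$ and $(i',j)\in\overline S$, then $|(L_i\cup L_{i'})\cap\overline S|\le 2t$; otherwise $|(L_i\cup L_{i'})\cap\overline S|\le 2t+1$.
   Context: $K_n\times K_n$ is the direct product of two complete graphs on $n$ vertices: vertex set $V=[n]\times[n]$ with $[n]=\{1,\dots,n\}$, and $(i,j)$ adjacent to $(i',j')$ iff $i\ne i'$ and $j\ne j'$. For $i\in[n]$, $L_i=\{(i,j):j\in[n]\}$ is a vertical layer. For vertices $x,y,z$ and $S\subseteq V$, $\Delta_z(x,y)=|d(x,z)-d(y,z)|$ (with $d$ the graph distance) and $\Delta_S(x,y)=\sum_{z\in S}\Delta_z(x,y)$. A set $S$ is a weak $k$-resolving set if $\Delta_S(x,y)\ge k$ for all distinct $x,y\in V$. *)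

(* Defs.v *)
(* Vertices of K_n x K_n are pairs in 'I_n * 'I_n
   (0-based indexing of [n]). *)
From mathcomp Require Import all_boot.
Set Implicit Arguments. Unset Strict Implicit. Unset Printing Implicit Defensive.

Section KnKn.
Variable n : nat.
Definition vtx := ('I_n * 'I_n)%type.

Definition adj (x y : vtx) : bool := (x.1 != y.1) && (x.2 != y.2).

Fixpoint reach (k : nat) (x : vtx) : {set vtx} :=
  match k with
  | 0 => [set x]
  | k'.+1 => reach k' x :|: [set y | [exists z in reach k' x, adj z y]]
  end.

(* graph distance: least k with y reachable within k steps
   (returns #|[set: vtx]| if unreachable, which never happens for n >= 3) *)
Definition dist (x y : vtx) : nat :=
  find (fun k => y \in reach k x) (iota 0 #|[set: vtx]|).

Definition Delta (z x y : vtx) : nat :=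
  (dist x z - dist y z) + (dist y z - dist x z).

Definition DeltaS (S : {set vtx}) (x y : vtx) : nat :=
  \sum_(z in S) Delta z x y.

Definition weak_resolving (k : nat) (S : {set vtx}) : Prop :=
  forall x y : vtx, x != y -> k <= DeltaS S x y.

Definition layer (i : 'I_n) : {set vtx} := [set x : vtx | x.1 == i].
End KnKn.

(* Main.v *)
Require Import Defs.
From mathcomp Require Import all_boot.
Set Implicit Arguments. Unset Strict Implicit.

Lemma third (n : nat) (a b : 'I_n) : 3 <= n -> exists c : 'I_n, (c != a) && (c != b).
Proof.
move=> hn; case: (boolP [exists c : 'I_n, (c != a) && (c != b)]) => [/existsP //|/existsPn H]; exfalso.
have: [set: 'I_n] \subset [set a; b].
  apply/subsetP => c _; have := H c; rewrite !in_set2 negb_and !negbK; by case/orP => ->; rewrite ?orbT.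
move/subset_leq_card; rewrite cardsT card_ord cards2.
by case: (a != b) => /=; move=> h; move: (leq_trans hn h).
Qed.

Lemma reach1 n (x y : vtx n) : (y \in reach 1 x) = (y == x) || adj x y.
Proof.
rewrite /= in_setU in_set1 in_set; congr (_ || _); apply/existsP/idP => [[z /andP[]]|h].
  by rewrite inE => /eqP ->.
by exists x; rewrite inE eqxx.
Qed.

Lemma reach2 n (x y : vtx n) : 3 <= n -> y \in reach 2 x.
Proof.
move=> hn.
rewrite [reach 2 x]/= in_setU -/(reach 1 x) reach1 in_set.
case: (boolP (adj x y)) => hxy; first by rewrite orbT.
have [c /andP [c1 c2]] := third x.1 y.1 hn.
have [d /andP [d1 d2]] := third x.2 y.2 hn.
apply/orP; right; apply/existsP; exists (c, d); rewrite reach1 /adj /=.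
by rewrite c2 d2 (eq_sym x.1) c1 (eq_sym x.2) d1 orbT.
Qed.

Lemma dist_eq n (x y : vtx n) : 3 <= n ->
  dist x y = if x == y then 0 else if adj x y then 1 else 2.
Proof.
move=> hn.
have hN : 3 <= #|[set: vtx n]|.
  rewrite cardsT card_prod card_ord; have h0 : 0 < n by apply: leq_trans hn.
  by rewrite (leq_trans hn) // leq_pmulr.
rewrite /dist -(subnKC hN) iotaD.
have e1 := reach1 x y; have e2 := reach2 x y hn.
move: e1 e2 => /= e1 e2.
rewrite /=.
rewrite e1 e2 in_set1.
case: (y =P x) => [e|yx]; first by rewrite e eqxx.
have -> : (x == y) = false by apply/eqP => e; apply: yx.
by case: (adj x y).
Qed.

Lemma Delta_le n (i i' j : 'I_n) (z : vtx n) : 3 <= n -> i != i' ->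
  Delta z (i, j) (i', j) <= (z \in layer i :|: layer i') + (z \in [set (i, j); (i', j)]).
Proof.
move=> hn ii; case: z => a b.
rewrite /Delta !dist_eq // /adj /= !inE /= !xpair_eqE.
have ii2 : (i' == i) = false by rewrite eq_sym (negPf ii).
case: (a =P i) => [ea|/eqP ai]; try subst a;
case: (b =P j) => [eb|/eqP bj]; try subst b;
rewrite ?(eq_sym j b) ?(eq_sym i a) ?(eq_sym i' a) ?eqxx ?(negPf ii) ?ii2 /=;
try (case: (a =P i') => [ea|/eqP ai']; try subst a);
rewrite ?eqxx ?(negPf ii) ?ii2 ?(negPf ai) ?(negPf bj) ?(negPf ai') //=.
Qed.

Lemma sum_ind (T : finType) (S A : {set T}) :
  \sum_(z in S) (z \in A : nat) = #|S :&: A|.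
Proof.
rewrite -sum1_card [RHS]big_mkcond [LHS]big_mkcond /=.
by apply: eq_bigr => z _; rewrite inE; case: (z \in S); case: (z \in A).
Qed.

Lemma c_le1 (T : finType) (S : {set T}) p q : p \notin S -> #|S :&: [set p; q]| <= 1.
Proof.
move=> pS; rewrite -(cards1 q); apply: subset_leq_card; apply/subsetP => z.
rewrite !inE => /andP[zS /orP[/eqP ez|->//]]; by subst; rewrite zS in pS.
Qed.

Lemma c_0 (T : finType) (S : {set T}) p q : p \notin S -> q \notin S -> #|S :&: [set p; q]| = 0.
Proof.
move=> pS qS; apply/eqP; rewrite cards_eq0; apply/eqP/setP => z.
rewrite !inE; apply/negP => /andP[zS /orP[/eqP ez|/eqP ez]]; subst; by rewrite zS in pS qS.
Qed.



Theorem mainTheorem7 (n t : nat) (S : {set vtx n}) :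
  4 <= n -> 1 <= t <= n - 1 ->
  weak_resolving (2 * n - 2 * t) S ->
  forall i i' : 'I_n, i != i' ->
    if [exists j : 'I_n, ((i, j) \in ~: S) && ((i', j) \in ~: S)]
    then #|(layer i :|: layer i') :&: ~: S| <= 2 * t
    else #|(layer i :|: layer i') :&: ~: S| <= 2 * t + 1.
Proof.
move=> hn /andP[t1 t2] hS i i' ii.
have n3 : 3 <= n := ltnW hn.
set L := layer i :|: layer i'.
have cL : #|L| = 2 * n.
  have -> : L = setX [set i; i'] [set: 'I_n].
    by apply/setP => -[a b]; rewrite /L /layer !inE /= andbT.
  have := cardsX [set i; i'] [set: 'I_n]; rewrite cards2 ii cardsT card_ord.
  by move=> <-.
have key : forall j, 2 * n - 2 * t <= #|S :&: L| + #|S :&: [set (i, j); (i', j)]|.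
  move=> j; apply: leq_trans (hS (i, j) (i', j) _) _.
    by rewrite xpair_eqE negb_and ii.
  rewrite /DeltaS -!sum_ind -big_split /=.
  by apply: leq_sum => z _; apply: Delta_le.
have sp : #|L :&: ~: S| + #|S :&: L| = 2 * n.
  by rewrite -cL -(cardsID S L) addnC setDE setIC.
case: existsP => [[j /andP[h1 h2]] | hne].
  have := key j; rewrite c_0 -?in_setC // addn0 => h.
  by rewrite -(leq_add2r #|S :&: L|) sp -leq_subLR.
case: (set_0Vmem (L :&: ~: S)) => [->|[[a j] hx]]; first by rewrite cards0.
move: hx; rewrite !inE /= => /andP[/orP[/eqP ea|/eqP ea] hxS]; subst a.
  have := key j; have := c_le1 (i', j) hxS => h1 h2.
  rewrite -(leq_add2r #|S :&: L|) sp addnAC -leq_subLR subnDA leq_subLR.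
  by rewrite (leq_trans h2) // leq_add2l.
have := key j; rewrite setUC; have := c_le1 (i, j) hxS => h1 h2.
rewrite -(leq_add2r #|S :&: L|) sp addnAC -leq_subLR subnDA leq_subLR.
by rewrite (leq_trans h2) // leq_add2l.
Qed.
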